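(* Let $A$ be a cardinal algebra in which every two elements have a meet, and let $\mu:A\to[0,\infty]$ be a map preserving countable sums (including $0$) and binary meets. Then $\mu$ preserves countable joins (which exist in $A$).
   Context: A cardinal algebra is a commutative monoid $(A,0,+)$ with a countable sum operation satisfying: (A) $\sum_i a_i=a_0+\sum_i a_{i+1}$; (B) $\sum_i(a_i+b_i)=\sum_ia_i+\sum_ib_i$; (C) if $a+b=\sum_ic_i$ there exist $a_i,b_i$ with $a=\sum a_i$, $b=\sum b_i$, $a_i+b_i=c_i$; (D) if $a_i=b_i+a_{i+1}$ for all $i$, there is $c$ with $a_i=c+\sum_jb_{i+j}$ for all $i$. Meets and joins refer to the canonical order $a\le b\iff\exists c\,(a+c=b)$; $[0,\infty]$ is a cardinal algebra with the usual sums and order. *)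

(* Defs.v *)
From HB Require Import structures.
From mathcomp Require Import all_boot all_order all_algebra.
From mathcomp Require Import all_classical all_reals.
From mathcomp Require Import ereal sequences.
Set Implicit Arguments. Unset Strict Implicit. Unset Printing Implicit Defensive.

Record cardinal_algebra := CardinalAlgebra {
  ca_car :> Type;
  ca_zero : ca_car;
  ca_add : ca_car -> ca_car -> ca_car;
  ca_sum : (nat -> ca_car) -> ca_car;
  ca_addA : forall a b c, ca_add a (ca_add b c) = ca_add (ca_add a b) c;
  ca_addC : forall a b, ca_add a b = ca_add b a;
  ca_add0 : forall a, ca_add ca_zero a = a;
  ca_axA : forall a : nat -> ca_car,
    ca_sum a = ca_add (a 0%N) (ca_sum (fun i => a i.+1));
  ca_axB : forall a b : nat -> ca_car,
    ca_sum (fun i => ca_add (a i) (b i)) = ca_add (ca_sum a) (ca_sum b);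
  ca_axC : forall (a b : ca_car) (c : nat -> ca_car),
    ca_add a b = ca_sum c ->
    exists (a' b' : nat -> ca_car),
      [/\ a = ca_sum a', b = ca_sum b' & forall i, ca_add (a' i) (b' i) = c i];
  ca_axD : forall a b : nat -> ca_car,
    (forall i, a i = ca_add (b i) (a i.+1)) ->
    exists c : ca_car, forall i, a i = ca_add c (ca_sum (fun j => b (i + j)%N))
}.

Section CAOrder.
Variable A : cardinal_algebra.

Definition ca_le (a b : A) : Prop := exists c, ca_add a c = b.

Definition is_meet (m a b : A) : Prop :=
  [/\ ca_le m a, ca_le m b & forall z, ca_le z a -> ca_le z b -> ca_le z m].

Definition is_lub_seq (j : A) (a : nat -> A) : Prop :=
  (forall i, ca_le (a i) j) /\ (forall z, (forall i, ca_le (a i) z) -> ca_le j z).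
End CAOrder.

(* Main.v *)
From HB Require Import structures.
Require Import Defs.
From mathcomp Require Import all_boot all_order all_algebra.
From mathcomp Require Import all_classical all_reals.
From mathcomp Require Import ereal sequences.
Import Order.TTheory GRing.Theory Num.Theory.
Set Implicit Arguments. Unset Strict Implicit. Unset Printing Implicit Defensive.

Section CA.
Variable A : cardinal_algebra.
HB.instance Definition _ := Monoid.isComLaw.Build A (ca_zero A) (@ca_add A)
  (@ca_addA A) (@ca_addC A) (@ca_add0 A).
Local Notation "x ⊕ y" := (ca_add x y) (at level 50, left associativity).
Local Notation z0 := (ca_zero A).
Definition inf (x : A) := ca_sum (fun _ : nat => x).

Lemma addA (x y z : A) : x ⊕ (y ⊕ z) = x ⊕ y ⊕ z. Proof. exact: ca_addA. Qed.
Lemma addC (x y : A) : x ⊕ y = y ⊕ x. Proof. exact: ca_addC. Qed.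
Lemma add0 (x : A) : z0 ⊕ x = x. Proof. exact: ca_add0. Qed.
Lemma addx0 (x : A) : x ⊕ z0 = x. Proof. by rewrite addC add0. Qed.

Lemma sum_ext (f g : nat -> A) : (forall i, f i = g i) -> ca_sum f = ca_sum g.
Proof. by move=> H; congr ca_sum; apply: funext. Qed.

Lemma Dconst (a : A) (g : nat -> A) :
  (forall n, a = g n ⊕ a) -> exists C, a = C ⊕ ca_sum g.
Proof. move=> H; have [C HC] := @ca_axD A (fun _ => a) g H. by exists C; apply: (HC 0). Qed.

Lemma Dconst_inf (a g : A) : a = g ⊕ a -> exists C, a = C ⊕ inf g.
Proof. by move=> H; have [C HC] := @Dconst a (fun _ => g) (fun _ => H); exists C. Qed.

Lemma sum0 : ca_sum (fun _ : nat => z0) = z0.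
Proof.
have [C HC] := @Dconst z0 (fun _ => z0) (fun n => esym (add0 z0)).
set z := ca_sum _ in HC *.
have zz : z ⊕ z = z.
  rewrite /z -ca_axB; by apply: sum_ext => i; rewrite add0.
by rewrite -[LHS]addx0 {1}HC addC -addA zz -HC.
Qed.

Lemma le_refl (x : A) : ca_le x x. Proof. exists z0; exact: addx0. Qed.
Lemma cle_trans (x y z : A) : ca_le x y -> ca_le y z -> ca_le x z.
Proof. move=> [c1 <-] [c2 <-]; exists (c1 ⊕ c2); by rewrite addA. Qed.
Lemma le_addr (x y : A) : ca_le x (x ⊕ y). Proof. by exists y. Qed.
Lemma le_addl (x y : A) : ca_le x (y ⊕ x). Proof. exists y; exact: addC. Qed.

Lemma infA (x : A) : inf x = x ⊕ inf x. Proof. exact: (ca_axA (fun _ => x)). Qed.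
Lemma infAr (x : A) : inf x ⊕ x = inf x. Proof. by rewrite addC -infA. Qed.

Lemma antisym (x y : A) : ca_le x y -> ca_le y x -> x = y.
Proof.
move=> [e He] [f Hf].
have H : x = (e ⊕ f) ⊕ x by rewrite addC addA He Hf.
have [C HC] := Dconst_inf H.
have Hinf : inf (e ⊕ f) = inf e ⊕ inf f := ca_axB (fun _ => e) (fun _ => f).
rewrite -He HC Hinf -!addA; congr (C ⊕ _).
by rewrite (addC (inf f) e) addA infAr.
Qed.

Lemma pos (x y : A) : x ⊕ y = z0 -> x = z0.
Proof. move=> H; apply: antisym; [by exists y | exists x; exact: add0]. Qed.

Lemma infD (x : A) : inf x ⊕ inf x = inf x.
Proof.
have HB : inf (x ⊕ x) = inf x ⊕ inf x := ca_axB (fun _ => x) (fun _ => x).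
apply: antisym.
- have H : inf x = (x ⊕ x) ⊕ inf x by rewrite -addA -!infA.
  have [C HC] := Dconst_inf H.
  exists C. by rewrite addC -HB -HC.
- have H : inf x ⊕ inf x = x ⊕ (inf x ⊕ inf x) by rewrite addA -infA.
  have [C HC] := Dconst_inf H.
  exists C. by rewrite HC addC.
Qed.

Lemma abs_inf (a g : A) : a = g ⊕ a -> a ⊕ inf g = a.
Proof.
move=> H; have [C HC] := Dconst_inf H.
by rewrite {1}HC -addA infD -HC.
Qed.

Lemma abs_of (a Y g : A) : a = Y ⊕ inf g -> a ⊕ g = a.
Proof. by move=> ->; rewrite -addA infAr. Qed.

Lemma abs_sum (a : A) (g : nat -> A) : (forall n, a ⊕ g n = a) -> a ⊕ ca_sum g = a.
Proof.
move=> H.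
have H2 : forall n, a = inf (g n) ⊕ a.
  move=> n; rewrite addC abs_inf //; by rewrite addC H.
have [C HC] := Dconst H2.
rewrite {1}HC -addA -ca_axB (@sum_ext _ (fun i => inf (g i))) -?HC //.
move=> i; exact: infAr.
Qed.

Lemma refine2 (x y x' y' : A) : x ⊕ y = x' ⊕ y' ->
  exists p q u v, [/\ x = p ⊕ q, y = u ⊕ v, x' = p ⊕ u & y' = q ⊕ v].
Proof.
move=> H.
pose c := fun i : nat => match i with 0 => x' | 1 => y' | _ => z0 end.
have Hc : x ⊕ y = ca_sum c.
  rewrite H (ca_axA c) (ca_axA (fun i => c i.+1)) /c /=.
  by rewrite sum0 addx0.
have [a' [b' [Ha Hb Hab]]] := ca_axC Hc.
set Ra := ca_sum (fun i => a' i.+2).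
set Rb := ca_sum (fun i => b' i.+2).
have Ex : x = a' 0 ⊕ (a' 1 ⊕ Ra) by rewrite Ha (ca_axA a') (ca_axA (fun i => a' i.+1)).
have Ey : y = b' 0 ⊕ (b' 1 ⊕ Rb) by rewrite Hb (ca_axA b') (ca_axA (fun i => b' i.+1)).
have HR : Ra ⊕ Rb = z0.
  rewrite /Ra /Rb -ca_axB -sum0; apply: sum_ext => i; by rewrite Hab.
have Ra0 : Ra = z0 := pos HR.
have Rb0 : Rb = z0 by apply: (@pos Rb Ra); rewrite addC.
exists (a' 0), (a' 1), (b' 0), (b' 1); split.
- by rewrite Ex Ra0 addx0.
- by rewrite Ey Rb0 addx0.
- by rewrite (Hab 0).
- by rewrite (Hab 1).
Qed.


Lemma wc (p q u : A) : p ⊕ q = p ⊕ u -> exists K, p ⊕ K = p /\ q ⊕ K = u ⊕ K.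
Proof.
move=> H0.
have step : forall t : A * A * A, exists s : A * A * A * A,
   t.1.1 ⊕ t.1.2 = t.1.1 ⊕ t.2 ->
   [/\ t.1.1 = s.1.1.1 ⊕ s.1.1.2, t.1.2 = s.1.1.2 ⊕ s.2, t.2 = s.1.2 ⊕ s.2
     & s.1.1.1 ⊕ s.1.1.2 = s.1.1.1 ⊕ s.1.2].
  move=> [[P S] R] /=.
  have [HPS|nH] := pselect (P ⊕ S = P ⊕ R); last by exists (P, S, R, P).
  have [p1 [q1 [u1 [v1 [E1 E2 E3 E4]]]]] := refine2 HPS.
  exists (p1, u1, q1, v1) => _ /=; split=> //.
  by rewrite -E3 -E1.
have [f Hf] := choice step.
pose T := fun n => iter n (fun t => (f t).1) (p, q, u).
pose P := fun n => (T n).1.1.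
pose S := fun n => (T n).1.2.
pose R := fun n => (T n).2.
pose g := fun n => (f (T n)).2.
have inv : forall n, P n ⊕ S n = P n ⊕ R n.
  elim=> [|n IH]; first exact: H0.
  by case: (Hf (T n) IH).
have HP : forall n, P n = S n.+1 ⊕ P n.+1.
  by move=> n; case: (Hf (T n) (inv n)) => E _ _ _; rewrite addC.
have HP' : forall n, P n = R n.+1 ⊕ P n.+1.
  move=> n; case: (Hf (T n) (inv n)) => E _ _ E'; rewrite addC.
  rewrite [LHS]E; exact: E'.
have HS : forall n, S n = g n ⊕ S n.+1.
  by move=> n; case: (Hf (T n) (inv n)) => _ E _ _; rewrite addC.
have HR : forall n, R n = g n ⊕ R n.+1.
  by move=> n; case: (Hf (T n) (inv n)) => _ _ E _; rewrite addC.
have [Cs HCs] := ca_axD HS.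
have [Cr HCr] := ca_axD HR.
have [Cp HCp] := ca_axD HP.
have [Cp' HCp'] := ca_axD HP'.
have pCs : p ⊕ Cs = p.
  apply: (@abs_of _ (Cp ⊕ ca_sum (fun j => ca_sum (fun k => g (j.+1 + k))))).
  have E : ca_sum (fun j => S j.+1) =
      inf Cs ⊕ ca_sum (fun j => ca_sum (fun k => g (j.+1 + k))).
    rewrite /inf -ca_axB; apply: sum_ext => j; exact: HCs.
  have E0 : p = Cp ⊕ ca_sum (fun j => S j.+1) := HCp 0.
  rewrite [LHS]E0.
  by rewrite E [LHS](AC (1*2) ((1*3)*2)).
have pCr : p ⊕ Cr = p.
  apply: (@abs_of _ (Cp' ⊕ ca_sum (fun j => ca_sum (fun k => g (j.+1 + k))))).
  have E : ca_sum (fun j => R j.+1) =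
      inf Cr ⊕ ca_sum (fun j => ca_sum (fun k => g (j.+1 + k))).
    rewrite /inf -ca_axB; apply: sum_ext => j; exact: HCr.
  have E0 : p = Cp' ⊕ ca_sum (fun j => R j.+1) := HCp' 0.
  rewrite [LHS]E0.
  by rewrite E [LHS](AC (1*2) ((1*3)*2)).
have pICs : p ⊕ inf Cs = p by apply: abs_inf; rewrite addC pCs.
have pICr : p ⊕ inf Cr = p by apply: abs_inf; rewrite addC pCr.
exists (inf Cs ⊕ inf Cr); split; first by rewrite addA pICs pICr.
have -> : q = Cs ⊕ ca_sum (fun j => g (0 + j)) := HCs 0.
have -> : u = Cr ⊕ ca_sum (fun j => g (0 + j)) := HCr 0.
rewrite [LHS](AC (2*2) ((2*(3*1))*4)) [RHS](AC (2*2) ((2*3)*(4*1))).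
by rewrite /= !infAr.
Qed.


Fixpoint psum (g : nat -> A) (n : nat) : A :=
  if n is n'.+1 then psum g n' ⊕ g n' else z0.

Lemma prefix (g : nat -> A) n : ca_sum g = psum g n ⊕ ca_sum (fun k => g (n + k)).
Proof.
elim: n => [|n IH] /=; first by rewrite add0; apply: sum_ext => i.
rewrite IH (ca_axA (fun k => g (n + k))) /= addn0 -addA; congr (_ ⊕ (_ ⊕ _)).
by apply: sum_ext => k; rewrite addSnnS.
Qed.

Lemma absorb_term (g : nat -> A) m x : g m ⊕ x = g m -> ca_sum g ⊕ x = ca_sum g.
Proof.
move=> H; rewrite (prefix g m) (ca_axA (fun k => g (m + k))) /= addn0.
by rewrite [LHS](AC ((1*2)*1) (1*((2*4)*3))) /= H.
Qed.

Lemma chain_ub (a d : nat -> A) : (forall n, a n.+1 = a n ⊕ d n) ->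
  forall n, ca_le (a n) (a 0 ⊕ ca_sum d).
Proof.
move=> H n. have E : a n = a 0 ⊕ psum d n.
  elim: n => [|n IH] /=; first by rewrite addx0.
  by rewrite H IH addA.
exists (ca_sum (fun k => d (n + k))). by rewrite E -addA -prefix.
Qed.

Lemma chain_least (a d : nat -> A) (b : A) : (forall n, a n.+1 = a n ⊕ d n) ->
  (forall n, ca_le (a n) b) -> ca_le (a 0 ⊕ ca_sum d) b.
Proof.
move=> Hd Hb.
have [c Hc] := choice Hb.
have HK : forall n, exists K, b ⊕ K = b /\ c n ⊕ K = d n ⊕ c n.+1 ⊕ K.
  move=> n.
  have E : a n ⊕ c n = a n ⊕ (d n ⊕ c n.+1) by rewrite Hc addA -Hd Hc.
  have [p [q [u [v [E1 E2 E3 E4]]]]] := refine2 E.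
  have Epq : p ⊕ q = p ⊕ u by rewrite -E1 -E3.
  have [K [HK1 HK2]] := wc Epq.
  exists K; split.
    by rewrite -(Hc n) E1 [LHS](AC 4 ((1*4)*2*3)) /= HK1.
  rewrite E2 E4 [LHS](AC 3 ((1*3)*2)) /= -HK2.
  by rewrite [LHS](AC 3 ((1*3)*2)).
have [Kf HKf] := choice HK.
pose K := ca_sum (fun n => inf (Kf n)).
have bK : b ⊕ K = b.
  apply: abs_sum => n; apply: abs_inf.
  by rewrite addC; case: (HKf n).
have KK : forall n, K ⊕ Kf n = K.
  move=> n; apply: absorb_term => /=; exact: infAr.
have chain : forall n, c n ⊕ K = d n ⊕ (c n.+1 ⊕ K).
  move=> n; case: (HKf n) => _ E.
  have -> : c n ⊕ K = c n ⊕ Kf n ⊕ K by rewrite -addA (addC (Kf n)) KK.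
  by rewrite E -!addA (addC (Kf n)) KK.
have [C HC] := ca_axD chain.
exists C.
have := HC 0; rewrite /= => HC0.
rewrite -[RHS]bK -(Hc 0) -[in RHS]addA HC0.
by rewrite [RHS](AC (1*2) ((1*3)*2)).
Qed.


Lemma join_le (x y m y' z : A) : is_meet m x y -> y = m ⊕ y' ->
  ca_le x z -> ca_le y z -> ca_le (x ⊕ y') z.
Proof.
move=> [_ _ Hm] Ey [e He] [f Hf].
have E : x ⊕ e = y ⊕ f by rewrite He Hf.
have [al [be [ga [de [E1 E2 E3 E4]]]]] := refine2 E.
have : ca_le al m by apply: Hm; [exists be; rewrite E1 | exists ga; rewrite E3].
move=> [mu Hmu].
have E5 : al ⊕ ga = al ⊕ (mu ⊕ y') by rewrite -E3 Ey -Hmu addA.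
have [K [HK1 HK2]] := wc E5.
exists (de ⊕ mu ⊕ K).
rewrite -He E1 E2 -[in RHS]HK1.
rewrite [RHS](AC ((2*1)*2) (((1*3)*5)*(4*2))) /= HK2.
by rewrite [LHS](AC (3*3) (((1*2)*4)*((5*3)*6))).
Qed.

End CA.

Local Open Scope classical_set_scope.
Local Open Scope ereal_scope.

Theorem lemma4p9 (R : realType) (A : cardinal_algebra) (mu : A -> \bar R)
  (hmeet : forall a b : A, exists m : A, is_meet m a b)
  (mu_ge0 : forall a, 0 <= mu a)
  (mu0 : mu (ca_zero A) = 0)
  (mu_add : forall a b : A, mu (ca_add a b) = mu a + mu b)
  (mu_sum : forall a : nat -> A,
     mu (ca_sum a) = \sum_(0 <= i <oo) mu (a i))
  (mu_meet : forall a b m : A, is_meet m a b -> mu m = mine (mu a) (mu b)) :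
  forall a : nat -> A,
    (exists j : A, is_lub_seq j a) /\
    (forall j : A, is_lub_seq j a -> mu j = ereal_sup (range (fun i => mu (a i)))).
Proof.
move=> a.
have hm2 : forall p : A * A, exists m : A, is_meet m p.1 p.2 by move=> [x y]; exact: hmeet.
have [mt Hmt] := choice hm2.
have hr : forall p : A * A, exists c : A, ca_le p.1 p.2 -> ca_add p.1 c = p.2.
  move=> [x y] /=; have [[c Hc]|nH] := pselect (ca_le x y); first by exists c.
  by exists x => /nH.
have [rf Hrf] := choice hr.
pose B := fix B (n : nat) : A :=
  if n is n'.+1 then ca_add (B n') (rf (mt (B n', a n'.+1), a n'.+1)) else a 0%N.
pose m := fun n => mt (B n, a n.+1).
pose D := fun n => rf (m n, a n.+1).
have BS : forall n, B n.+1 = ca_add (B n) (D n) by [].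
have Hm : forall n, is_meet (m n) (B n) (a n.+1) := fun n => Hmt (B n, a n.+1).
have HaD : forall n, a n.+1 = ca_add (m n) (D n).
  move=> n; apply/esym; apply: (Hrf (m n, a n.+1)); by case: (Hm n).
pose E := fun i => if i is n.+1 then D n else a 0%N.
pose j := ca_sum E.
have Ej : j = ca_add (B 0%N) (ca_sum D) := ca_axA E.
have aB : forall n, ca_le (a n) (B n).
  case=> [|n]; first exact: le_refl.
  case: (Hm n) => [[w Hw] _ _].
  exists w; rewrite HaD BS -Hw.
  by rewrite -!addA (addC (D n)).
have ub : forall n, ca_le (a n) j.
  move=> n; apply: (cle_trans (aB n)); rewrite Ej; exact: chain_ub.
have least : forall z, (forall i, ca_le (a i) z) -> ca_le j z.
  move=> z Hz; rewrite Ej; apply: chain_least => //.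
  elim=> [|n IH]; first exact: Hz.
  rewrite BS; apply: (join_le (Hm n) (HaD n)) => //.
have jlub : is_lub_seq j a by split.
split; first by exists j.
move=> j' [ub' least'].
set S := ereal_sup _.
have mono : forall x y, ca_le x y -> mu x <= mu y.
  by move=> x y [c <-]; rewrite mu_add; apply: leeDl.
have aS : forall i, mu (a i) <= S.
  by move=> i; apply: ereal_sup_ubound; exists i.
have muB : forall n, mu (B n) <= S.
  elim=> [|n IH]; first exact: aS.
  rewrite BS mu_add.
  have Ea := congr1 mu (HaD n); rewrite mu_add (mu_meet _ _ _ (Hm n)) in Ea.
  have [h|h] := leP (mu (B n)) (mu (a n.+1)).
    by rewrite (min_l h) in Ea; rewrite -Ea; exact: aS.
  rewrite (min_r (ltW h)) in Ea.
  have fin : mu (a n.+1) \is a fin_num.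
    by rewrite ge0_fin_numE // (lt_le_trans h) // leey.
  have D0 : mu (D n) = 0.
    by rewrite -(addeK (mu (D n)) fin) (addeC (mu (D n))) -Ea subee.
  by rewrite D0 adde0.
have partial : forall n, \sum_(0 <= i < n.+1) mu (E i) = mu (B n).
  elim=> [|n IH]; first by rewrite big_nat1.
  by rewrite BS big_nat_recr //= IH mu_add.
have jS : mu j <= S.
  rewrite /j mu_sum; apply: ereal_normedtype.lime_le; first exact: is_cvg_nneseries.
  apply: nearW; case=> [|n]; last by rewrite partial.
  by rewrite big_geq // (le_trans (mu_ge0 (a 0%N)) (aS 0%N)).
apply/eqP; rewrite eq_le; apply/andP; split.
  apply: le_trans jS; apply: mono; apply: least'; exact: ub.
apply: ge_ereal_sup => x [i _ <-]; apply: mono; exact: ub'.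
Qed.
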